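(* Let $k\ge2$, $n=2^k-1$. The binary simplex $(n,k)$ code has the Easy Repair Property.
   Context: The binary simplex $(n,k)$ code has generator matrix $G\in\mathbb F_2^{k\times n}$ whose columns $g_1,\dots,g_n$ are all the distinct nonzero vectors of $\mathbb F_2^k$. Nodes are coordinates $c_1,\dots,c_n$ of codewords $c=uG$. An erasure pattern is a set $S^e$ of erased nodes; the others are live. It is correctable if no two distinct codewords coincide on all live positions. A node $c_i$ is related to distinct nodes $c_{j_1},\dots,c_{j_\gamma}$ (all different from $c_i$) if $g_i=g_{j_1}+\dots+g_{j_\gamma}$. An erased node allows for easy repair if it is related to $\gamma\le2$ live nodes. An erasure pattern allows for easy repair if all erased nodes can be recovered by a sequence of easy repairs, where after each step the recovered node is regarded as live. A code has the Easy Repair Property if every correctable erasure pattern allows for easy repair. *)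

(* Defs.v *)
From mathcomp Require Import all_boot all_algebra.
Set Implicit Arguments. Unset Strict Implicit. Unset Printing Implicit Defensive.
Import GRing.Theory.
Local Open Scope ring_scope.

(* A binary linear code given by a generator matrix G : 'M['F_2]_(k, n).
   Nodes are the coordinates 'I_n; the codeword of message u is u *m G. *)

(* G is a generator matrix of the binary simplex (2^k-1, k) code:
   its columns are pairwise distinct and nonzero (hence, as n = 2^k - 1,
   they are exactly all nonzero vectors of F_2^k). *)
Definition simplex_gen (k n : nat) (G : 'M['F_2]_(k, n)) : Prop :=
  n = (2 ^ k - 1)%N /\
  (forall i, col i G != 0) /\
  (forall i j, col i G = col j G -> i = j).

Definition correctable (k n : nat) (G : 'M['F_2]_(k, n)) (S : {set 'I_n}) :=
  forall u v : 'rV['F_2]_k,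
    (forall i, i \notin S -> (u *m G) 0 i = (v *m G) 0 i) ->
    u *m G = v *m G.

Definition easy_node (k n : nat) (G : 'M['F_2]_(k, n)) (L : {set 'I_n})
  (i : 'I_n) : Prop :=
  (exists j, [/\ j \in L, j != i & col i G = col j G]) \/
  (exists j1 j2, [/\ j1 \in L, j2 \in L, j1 != j2, j1 != i & j2 != i] /\
                     col i G = col j1 G + col j2 G).

Fixpoint easy_seq (k n : nat) (G : 'M['F_2]_(k, n)) (L : {set 'I_n})
  (s : seq 'I_n) : Prop :=
  match s with
  | [::] => True
  | i :: s' => easy_node G L i /\ easy_seq G (i |: L) s'
  end.

Definition allows_easy_repair (k n : nat) (G : 'M['F_2]_(k, n))
  (S : {set 'I_n}) : Prop :=
  exists s : seq 'I_n,
    [/\ all (fun i => i \in S) s, {subset S <= s} & easy_seq G (~: S) s].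

Definition easy_repair_property (k n : nat) (G : 'M['F_2]_(k, n)) : Prop :=
  forall S : {set 'I_n}, correctable G S -> allows_easy_repair G S.

(* Main.v *)
Require Import Defs.
From mathcomp Require Import all_boot all_algebra.
Set Implicit Arguments. Unset Strict Implicit. Unset Printing Implicit Defensive.
Import GRing.Theory.
Local Open Scope ring_scope.

Lemma F2_cases (c : 'F_2) : c = 0 \/ c = 1.
Proof. case: c => [[|[|m]]] Hm; [left|right|]; try exact: val_inj. by []. Qed.

Lemma F2_addxx (c : 'F_2) : c + c = 0.
Proof. case: (F2_cases c) => ->; [exact: addr0 | exact: val_inj]. Qed.

Lemma mx_addxx m n (x : 'M['F_2]_(m,n)) : x + x = 0.
Proof. by apply/matrixP=> i j; rewrite !mxE F2_addxx. Qed.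

Lemma simplex_surj k n (G : 'M['F_2]_(k, n)) :
  simplex_gen G -> forall x : 'cV['F_2]_k, x != 0 -> exists i, col i G = x.
Proof.
case=> Hn [Hnz Hinj] x Hx.
pose A := [set col i G | i : 'I_n].
have sub : A \subset [set~ 0].
  apply/subsetP=> y /imsetP [i _ ->]; rewrite !inE; exact: Hnz.
have cA : #|A| = n by rewrite card_imset ?card_ord //; move=> i j; exact: Hinj.
have cB : #|[set~ (0 : 'cV['F_2]_k)]| = n.
  by rewrite cardsC1 card_mx card_Fp // muln1 Hn subn1.
have /eqP EA : A == [set~ 0] by rewrite eqEcard sub cA cB leqnn.
have : x \in A by rewrite EA !inE.
by case/imsetP=> i _ ->; exists i.
Qed.

Lemma correctable_sub k n (G : 'M['F_2]_(k, n)) (S S' : {set 'I_n}) :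
  correctable G S -> S' \subset S -> correctable G S'.
Proof.
move=> HS sub u v H; apply: HS => i Hi; apply: H.
by apply: contra Hi; apply: (subsetP sub).
Qed.

Lemma key k n (G : 'M['F_2]_(k, n)) (S : {set 'I_n}) (i0 : 'I_n) :
  simplex_gen G -> correctable G S -> i0 \in S ->
  exists i, i \in S /\ easy_node G (~: S) i.
Proof.
move=> HG HS i0S.
have [_ [Hnz Hinj]] := HG.
set L := ~: S.
case: (boolP [exists a : 'I_n, exists b : 'I_n, [&& a \in L, b \in L, a != b &
   [forall c : 'I_n, (c \in L) ==> (col c G != col a G + col b G)]]]).
  case/existsP=> a /existsP [b /and4P [aL bL ab /forallP Hc]].
  have x0 : col a G + col b G != 0.
    apply/eqP=> Hx0; move/negP: ab; apply; apply/eqP; apply: Hinj.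
    by rewrite -[col a G]addr0 -(mx_addxx (col b G)) addrA Hx0 add0r.
  have [i Ei] := simplex_surj HG x0.
  have iNL : i \notin L.
    apply/negP=> iL; have := Hc i; rewrite iL /= Ei.
    by rewrite eqxx.
  exists i; split; first by move: iNL; rewrite !inE negbK.
  right; exists a, b; split => //.
  split => //.
  - by apply/eqP=> E; rewrite -E aL in iNL.
  - by apply/eqP=> E; rewrite -E bL in iNL.
rewrite negb_exists => /forallP Hn.
have Hclos a b : a \in L -> b \in L -> a != b ->
    exists2 c, c \in L & col c G = col a G + col b G.
  move=> aL bL ab.
  move: (Hn a); rewrite negb_exists => /forallP/(_ b).
  rewrite aL bL ab /= negb_forall => /existsP [c].
  by rewrite negb_imply negbK => /andP [cL /eqP E]; exists c.
pose rc (i : 'I_n) : 'rV['F_2]_k := \row_l G l i.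
have rc_inj i j : rc i = rc j -> col i G = col j G.
  move=> E; apply/colP => l; have := congr1 (fun r : 'rV_k => r 0 l) E.
  by rewrite /rc !mxE.
pose Wr (r : 'rV['F_2]_k) := (r == 0) || [exists i, (i \in L) && (r == rc i)].
have W0 : Wr 0 by rewrite /Wr eqxx.
have WD r1 r2 : Wr r1 -> Wr r2 -> Wr (r1 + r2).
  case/orP=> [/eqP -> | /existsP [a /andP [aL /eqP ->]]]; first by rewrite add0r.
  case/orP=> [/eqP -> | /existsP [b /andP [bL /eqP ->]]].
    by rewrite addr0 /Wr; apply/orP; right; apply/existsP; exists a; rewrite aL eqxx.
  case: (eqVneq a b) => [-> | ab]; first by rewrite mx_addxx.
  have [c cL Ec] := Hclos a b aL bL ab.
  apply/orP; right; apply/existsP; exists c; rewrite cL /=; apply/eqP.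
  apply/rowP=> l; have := congr1 (fun M : 'cV_k => M l 0) Ec.
  by rewrite /rc !mxE => ->.
have WZ (c : 'F_2) r : Wr r -> Wr (c *: r).
  by case: (F2_cases c) => ->; rewrite ?scale0r ?scale1r.
pose B : 'M['F_2]_(n, k) := \matrix_(i, l) (if i \in L then G l i else 0).
have WB (r : 'rV['F_2]_k) : (r <= B)%MS -> Wr r.
  case/submxP=> D ->; rewrite mulmx_sum_row.
  apply: (big_ind Wr) => // i _; apply: WZ.
  case: (boolP (i \in L)) => iL.
    apply/orP; right; apply/existsP; exists i; rewrite iL /=; apply/eqP.
    by apply/rowP=> l; rewrite /rc !mxE iL.
  apply/orP; left; apply/eqP; apply/rowP=> l; by rewrite !mxE (negbTE iL).
have NB : ~~ (rc i0 <= B)%MS.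
  apply/negP=> /WB /orP [/eqP E | /existsP [i /andP [iL /eqP E]]].
    move/eqP: (Hnz i0); apply; apply/colP=> l.
    by have := congr1 (fun r : 'rV_k => r 0 l) E; rewrite /rc !mxE.
  have Ei := Hinj _ _ (rc_inj _ _ E); rewrite -Ei in iL.
  by move: iL; rewrite inE i0S.
move: NB; rewrite submxE => Hy.
have [j Hj] : exists j, (rc i0 *m cokermx B) 0 j != 0.
  apply/existsP; apply: contraR Hy; rewrite negb_exists => /forallP H.
  by apply/eqP/rowP=> j; rewrite [in RHS]mxE; apply/eqP; move: (H j); rewrite negbK.
pose u : 'rV['F_2]_k := \row_l cokermx B l j.
have E1 i : i \in L -> (u *m G) 0 i = (0 *m G) 0 i.
  move=> iL; rewrite mul0mx [in RHS]mxE.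
  have := congr1 (fun M : 'M['F_2]_(n, k) => M i j) (mulmx_coker B).
  rewrite [in RHS]mxE => H; rewrite -H !mxE; apply: eq_bigr => l _.
  by rewrite !mxE iL mulrC.
have : u *m G = 0 *m G by apply: HS => i iS; apply: E1; rewrite inE.
move/(congr1 (fun M : 'M['F_2]_(1, n) => M 0 i0)); rewrite mul0mx [in RHS]mxE => H.
exfalso; move/negP: Hj; apply; apply/eqP; rewrite -H !mxE; apply: eq_bigr => l _.
by rewrite !mxE mulrC.
Qed.

Theorem theorem3p2 (k n : nat) (G : 'M['F_2]_(k, n)) :
  (2 <= k)%N -> simplex_gen G -> easy_repair_property G.
Proof.
move=> _ HG S.
move: {2}#|S| (leqnn #|S|) => m; elim: m S => [|m IH] S HS Hc.
  move: HS; rewrite leqn0 cards_eq0 => /eqP ->.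
  by exists [::]; split => // x; rewrite inE.
case: (set_0Vmem S) => [-> | [i0 i0S]].
  by exists [::]; split => // x; rewrite inE.
have [i [iS Hi]] := key HG Hc i0S.
have Hc' : correctable G (S :\ i) by apply: correctable_sub Hc (subD1set S i).
have HS' : (#|S :\ i| <= m)%N by move: HS; rewrite (cardsD1 i S) iS.
have [s [Hall Hsub Hseq]] := IH _ HS' Hc'.
exists (i :: s); split.
- rewrite /= iS /=; apply: sub_all Hall => x; rewrite inE => /andP [_ ->] //.
- move=> x xS; rewrite inE; case: (eqVneq x i) => //= xi; apply: Hsub.
  by rewrite !inE xi xS.
- split => //.
  have -> : i |: ~: S = ~: (S :\ i).
    by apply/setP => x; rewrite !inE negb_and negbK.
  exact: Hseq.
Qed.
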